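(* Let $X:\mathbb{R}^d\to\mathbb{R}_+$ and $M:\mathbb{R}^d\to\mathbb{R}^d$ be random mappings such that $X(ct)=X(t)$ and $M(ct)=cM(t)$ for all $t\in\mathbb{R}^d\setminus\{0\}$ and all scalars $c>0$, and suppose there is $a>0$ with $$\sup_{t\in\mathbb{R}^d\setminus\{0\}}\mathbb{E}[X(t)]<1\quad\text{and}\quad\sup_{t\in\mathbb{S}^{d-1}}\mathbb{E}[|M(t)|^{-a}X(t)]<1.$$ Let $\varphi:\mathbb{R}^d\to\mathbb{R}_+$ be bounded and suppose there is $c_0>0$ with $\varphi(t)\le\mathbb{E}[\varphi(M(t))X(t)]$ for all $t\in\mathbb{R}^d$ with $|t|>c_0$. Then $\varphi(t)=O(|t|^{-a})$ as $|t|\to\infty$.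
   Context: $|x|=\sum_i|x_i|$ is the $L^1$ norm on $\mathbb{R}^d$ and $\mathbb{S}^{d-1}=\{x\in\mathbb{R}^d:|x|=1\}$. *)

(* Defs.v *)
From HB Require Import structures.
From mathcomp Require Import all_boot all_order all_algebra.
From mathcomp Require Import all_classical all_reals all_analysis.
Set Implicit Arguments. Unset Strict Implicit. Unset Printing Implicit Defensive.
Import Order.TTheory GRing.Theory Num.Theory.
Local Open Scope ring_scope.

Definition l1norm (R : realType) (d : nat) (x : 'rV[R]_d) : R :=
  \sum_(i < d) `|x 0 i|.

(* |v|^{-a} as an extended real, with the convention |0|^{-a} = +oo (a > 0). *)
Definition l1norm_negpow (R : realType) (d : nat) (a : R) (v : 'rV[R]_d) : \bar R :=
  if v == 0 then +oo%E else ((l1norm v) `^ (- a))%:E.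

(* Main.v *)
Require Import Defs.
From HB Require Import structures.
From mathcomp Require Import all_boot all_order all_algebra.
From mathcomp Require Import all_classical all_reals all_analysis.
Import Order.TTheory GRing.Theory Num.Theory.
From mathcomp Require Import measurable_realfun.
Set Implicit Arguments. Unset Strict Implicit.
Local Open Scope ring_scope.
Local Open Scope classical_set_scope.

Lemma l1norm_ge0 (R : realType) d (v : 'rV[R]_d) : 0 <= l1norm v.
Proof. by apply: sumr_ge0 => i _. Qed.

Lemma l1normZ (R : realType) d (c : R) (v : 'rV[R]_d) :
  0 <= c -> l1norm (c *: v) = c * l1norm v.
Proof.
move=> c0; rewrite /l1norm mulr_sumr; apply: eq_bigr => i _.
by rewrite mxE normrM (ger0_norm c0).
Qed.

Lemma l1norm_eq0 (R : realType) d (v : 'rV[R]_d) : (l1norm v == 0) = (v == 0).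
Proof.
apply/idP/idP => [/eqP H|/eqP->]; last first.
  by rewrite /l1norm big1 // => i _; rewrite mxE normr0.
apply/eqP/rowP => i; rewrite mxE.
have := @psumr_eq0P R _ xpredT (fun i => `|v 0 i|) (fun i _ => normr_ge0 _) H i isT.
by move/eqP; rewrite normr_eq0 => /eqP.
Qed.

Lemma l1norm_gt0 (R : realType) d (v : 'rV[R]_d) : v != 0 -> 0 < l1norm v.
Proof. by move=> v0; rewrite lt_def l1norm_eq0 v0 l1norm_ge0. Qed.

Lemma negpow_ge0 (R : realType) d (a : R) (v : 'rV[R]_d) : (0 <= l1norm_negpow a v)%E.
Proof. by rewrite /l1norm_negpow; case: ifP => _ //; rewrite lee_fin powR_ge0. Qed.

Lemma measurable_negpow (R : realType) d (dT : measure_display) (Omega : measurableType dT)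
  (a : R) (M : Omega -> 'rV[R]_d) :
  (forall i : 'I_d, measurable_fun setT (fun w => M w 0 i)) ->
  measurable_fun setT (fun w => l1norm_negpow a (M w)).
Proof.
move=> mM.
have ml : measurable_fun setT (fun w => l1norm (M w)).
  by apply: measurable_sum => i; apply: measurableT_comp => //; exact: mM.
have -> : (fun w => l1norm_negpow a (M w)) = (fun w => if l1norm (M w) == 0 then +oo%E
     else ((l1norm (M w)) `^ (- a))%:E).
  by apply/funext => w; rewrite /l1norm_negpow l1norm_eq0.
have mb : measurable_fun setT (fun w => l1norm (M w) == 0).
  by apply: measurable_fun_eqr => //; exact: measurable_cst.
apply: (measurable_fun_ifT mb).
- exact: measurable_cst.
- apply/(measurable_EFinP _ (fun w => l1norm (M w) `^ (- a))).
  exact: (measurableT_comp (measurable_powR _) ml).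
Qed.

Lemma theta_of (R : realType) (x : \bar R) :
  (x < 1%:E)%E -> (x <= (Num.max (fine x) 0)%:E)%E /\ Num.max (fine x) 0 < 1.
Proof.
case: x => [r| |] //=.
- by rewrite lte_fin => r1; split; [rewrite lee_fin le_max lexx | rewrite gt_max r1 ltr01].
- by move=> _; split; [exact: leNye | rewrite /= gt_max ltr01].
Qed.

From mathcomp Require Import ring lra.

Definition wt {R : realType} (P A : R) := A * P / (P + A).

Lemma wt_ge0 (R : realType) (P A : R) : 0 < P -> 0 <= A -> 0 <= wt P A.
Proof. by move=> P0 A0; rewrite /wt divr_ge0 ?mulr_ge0 ?addr_ge0 // ltW. Qed.

Lemma wt_gt0 (R : realType) (P A : R) : 0 < P -> 0 < A -> 0 < wt P A.
Proof. by move=> P0 A0; rewrite /wt divr_gt0 ?mulr_gt0 ?addr_gt0. Qed.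

Lemma wt_leP (R : realType) (P A : R) : 0 < P -> 0 <= A -> wt P A <= P.
Proof.
move=> P0 A0; rewrite /wt ler_pdivrMr ?ltr_wpDr //.
by nra.
Qed.

Lemma wt_leA (R : realType) (P A : R) : 0 < P -> 0 <= A -> wt P A <= A.
Proof.
move=> P0 A0; rewrite /wt ler_pdivrMr ?ltr_wpDr //.
by nra.
Qed.

Lemma wt_id (R : realType) (P Sa Y Dp : R) : 0 < P -> 0 < Sa -> 0 < Y ->
  Dp * (1 - P / (P + Sa)) / wt P Sa + Dp * (P / (P + Sa)) / wt P Sa * Y^-1
  = Dp / wt P (Sa * Y).
Proof.
move=> P0 S0 Y0; rewrite /wt.
have h1 : P + Sa != 0 by rewrite gt_eqF ?addr_gt0.
have h2 : P + Sa * Y != 0 by rewrite gt_eqF ?addr_gt0 ?mulr_gt0.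
have h3 : P != 0 by rewrite gt_eqF. have h4 : Sa != 0 by rewrite gt_eqF.
have h5 : Y != 0 by rewrite gt_eqF.
field; rewrite ?h1 ?h2 ?h3 ?h4 ?h5 ?mulf_neq0 //.
Qed.

Lemma wt_self (R : realType) (P : R) : 0 < P -> wt P P = P / 2.
Proof. move=> P0; rewrite /wt; field; rewrite gt_eqF //; lra. Qed.

Theorem lemma4p6 (R : realType) (d : nat)
  (dT : measure_display) (Omega : measurableType dT) (P : probability Omega R)
  (X : 'rV[R]_d -> Omega -> R) (M : 'rV[R]_d -> Omega -> 'rV[R]_d)
  (phi : 'rV[R]_d -> R) (a c0 : R) :
  (* X, M are random mappings: measurable in omega for each fixed t *)
  (forall t, measurable_fun setT (X t)) ->
  (forall t (i : 'I_d), measurable_fun setT (fun w => M t w 0 i)) ->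
  (forall t, measurable_fun setT (fun w => phi (M t w) * X t w)) ->
  (forall t w, 0 <= X t w) ->
  (forall t c w, t != 0 -> 0 < c -> X (c *: t) w = X t w) ->
  (forall t c w, t != 0 -> 0 < c -> M (c *: t) w = c *: M t w) ->
  0 < a ->
  (ereal_sup [set (\int[P]_w (X t w)%:E)%E | t in [set t : 'rV[R]_d | t != 0%R]] < 1%:E)%E ->
  (ereal_sup [set (\int[P]_w (l1norm_negpow a (M t w) * (X t w)%:E))%E
             | t in [set t : 'rV[R]_d | l1norm t = 1%R]] < 1%:E)%E ->
  (forall t, 0 <= phi t) ->
  (exists B : R, forall t, phi t <= B) ->
  0 < c0 ->
  (forall t, c0 < l1norm t ->
     ((phi t)%:E <= \int[P]_w (phi (M t w) * X t w)%:E)%E) ->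
  exists C r : R, forall t, r < l1norm t -> phi t <= C * (l1norm t) `^ (- a).
Proof.
move=> mX mM mphiX X0 Xs Ms a0 H1 H2 phi0 [B phiB] c00 Hphi.
set s1 := ereal_sup _ in H1; set s2 := ereal_sup _ in H2.
have [hs1 th1] := theta_of H1; have [hs2 th2] := theta_of H2.
set th := Num.max (Num.max (fine s1) 0) (Num.max (fine s2) 0).
have thlt : th < 1 by rewrite gt_max th1 th2.
have s1th : (s1 <= th%:E)%E by apply: le_trans hs1 _; rewrite lee_fin le_max lexx.
have s2th : (s2 <= th%:E)%E by apply: le_trans hs2 _; rewrite lee_fin le_max lexx orbT.
pose K := Num.max B 1.
have K0 : 0 < K by rewrite lt_max ltr01 orbT.
have phiK t : phi t <= K by rewrite le_max phiB.
have ca0 : 0 < c0 `^ a by rewrite powR_gt0.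
exists (2 * K * c0 `^ a), c0 => t0 ht0.
set s0 := l1norm t0.
have s0pos : 0 < s0 by apply: lt_trans ht0.
pose Pa := s0 `^ a.
have P0 : 0 < Pa by rewrite powR_gt0.
pose w x := wt Pa (x `^ a).
have w_ge0 x : 0 <= w x by rewrite wt_ge0 ?powR_ge0.
pose S := [set phi t * w (l1norm t) | t in [set t | c0 < l1norm t]].
have supS : has_sup S.
  split; first by exists (phi t0 * w s0); exists t0.
  exists (K * Pa) => _ [t _ <-].
  by apply: ler_pM => //; rewrite wt_leP ?powR_ge0.
pose D := sup S.
pose D' := Num.max D (K * c0 `^ a).
have ubD t : c0 < l1norm t -> phi t * w (l1norm t) <= D.
  by move=> ht; apply: sup_upper_bound => //; exists t.
have D'pos : 0 < D' by rewrite lt_max mulr_gt0 ?orbT.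
have key : forall t, c0 < l1norm t -> phi t * w (l1norm t) <= D' * th.
  move=> t ht; set s := l1norm t.
  have s0' : 0 < s by apply: lt_trans ht.
  pose u := s^-1 *: t.
  have tu : t = s *: u by rewrite /u scalerA mulfV ?gt_eqF // scale1r.
  have u0 : u != 0.
    apply/negP => /eqP u0; move: s0'; rewrite /s tu u0 scaler0.
    by rewrite /l1norm big1 ?ltxx // => i _; rewrite mxE normr0.
  have u1 : l1norm u = 1 by rewrite /u l1normZ ?invr_ge0 ?ltW // mulVf ?gt_eqF.
  have hX om : X t om = X u om by rewrite tu Xs.
  have hM om : M t om = s *: M u om by rewrite tu Ms.
  pose Sa := s `^ a.
  have Sa0 : 0 < Sa by rewrite powR_gt0.
  pose lam := Pa / (Pa + Sa).
  have lam0 : 0 < lam by rewrite divr_gt0 ?addr_gt0.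
  have lam1 : lam <= 1 by rewrite ler_pdivrMr ?addr_gt0 // mul1r lerDl ltW.
  pose ws := w s.
  have ws0 : 0 < ws by rewrite /ws /w wt_gt0.
  pose c1 := D' * (1 - lam) / ws; pose c2 := D' * lam / ws.
  have c10 : 0 <= c1.
    by apply: divr_ge0; [apply: mulr_ge0; [exact: ltW | rewrite subr_ge0] | exact: ltW].
  have c20 : 0 < c2 by apply: divr_gt0 => //; apply: mulr_gt0.
  have pw om : ((phi (M t om) * X t om)%:E <= c1%:E * (X u om)%:E
        + c2%:E * (l1norm_negpow a (M u om) * (X u om)%:E))%E.
    rewrite hX hM; set v := M u om; set x := X u om.
    have x0 : 0 <= x by apply: X0.
    case: (eqVneq x 0) => [->|xn0].
      rewrite mulr0; apply: adde_ge0; apply: mule_ge0; rewrite ?lee_fin ?negpow_ge0 //.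
      - exact: ltW.
      - by apply: mule_ge0; rewrite ?negpow_ge0.
    have xp : 0 < x by rewrite lt_def xn0.
    case: (eqVneq v 0) => [v0|vn0].
      by rewrite /l1norm_negpow v0 eqxx gt0_mulye ?lte_fin // gt0_muley ?lte_fin // addey ?leey.
    set y := l1norm v.
    have y0 : 0 < y by apply: l1norm_gt0.
    rewrite /l1norm_negpow (negbTE vn0) -/y -!EFinM -EFinD lee_fin.
    rewrite (_ : c1 * x + c2 * (y `^ (- a) * x) = (c1 + c2 * y `^ (- a)) * x); last by ring.
    apply: ler_wpM2r => //.
    have Ya0 : 0 < y `^ a by rewrite powR_gt0.
    have wsy0 : 0 < w (s * y) by rewrite /w wt_gt0 // powR_gt0 // mulr_gt0.
    have -> : c1 + c2 * y `^ (- a) = D' / w (s * y).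
      by rewrite /c1 /c2 /ws /w powRN powRM ?ltW // -/Sa /lam wt_id.
    rewrite ler_pdivlMr //.
    have ln : l1norm (s *: v) = s * y by rewrite l1normZ // ltW.
    case: (ltP c0 (s * y)) => h.
      by have := ubD (s *: v); rewrite ln => /(_ h) h'; apply: le_trans h' _; rewrite le_max lexx.
    apply: (@le_trans _ _ (K * c0 `^ a)); last by rewrite le_max lexx orbT.
    apply: ler_pM => //.
    apply: le_trans (wt_leA _ _) _ => //; first by rewrite powR_ge0.
    apply: ge0_ler_powR; rewrite ?nnegrE.
    - exact: ltW.
    - by apply: mulr_ge0; exact: ltW.
    - exact: ltW.
    - exact: h.
  have mL : measurable_fun setT (fun om => (phi (M t om) * X t om)%:E).
    by apply/(measurable_realfun.measurable_EFinP _ (fun om => phi (M t om) * X t om)).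
  have mXu : measurable_fun setT (fun om => (X u om)%:E).
    by apply/(measurable_realfun.measurable_EFinP _ (X u)).
  have mN : measurable_fun setT (fun om => l1norm_negpow a (M u om) * (X u om)%:E)%E.
    by apply: emeasurable_funM => //; apply: measurable_negpow.
  have N0 om : (0 <= l1norm_negpow a (M u om) * (X u om)%:E)%E.
    by rewrite mule_ge0 ?negpow_ge0 ?lee_fin.
  have L0 : forall om, [set: Omega] om -> (0 <= (phi (M t om) * X t om)%:E)%E.
    by move=> om _; rewrite lee_fin mulr_ge0.
  have m1 : measurable_fun setT (fun om => c1%:E * (X u om)%:E)%E.
    by apply: emeasurable_funM => //; exact: measurable_cst.
  have m2 : measurable_fun setT (fun om => c2%:E * (l1norm_negpow a (M u om) * (X u om)%:E))%E.
    by apply: emeasurable_funM => //; exact: measurable_cst.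
  have p1 : forall om, [set: Omega] om -> (0 <= c1%:E * (X u om)%:E)%E.
    by move=> om _; rewrite mule_ge0 // lee_fin.
  have p2 : forall om, [set: Omega] om -> (0 <= c2%:E * (l1norm_negpow a (M u om) * (X u om)%:E))%E.
    by move=> om _; rewrite mule_ge0 // lee_fin ltW.
  have h2 := ge0_le_integral P measurableT L0 mL (emeasurable_funD m1 m2) (fun om _ => pw om).
  rewrite (ge0_integralD P measurableT p1 m1 p2 m2) in h2.
  rewrite (ge0_integralZl_EFin P measurableT (fun om (_ : [set: Omega] om) => (X0 u om : (0 <= (X u om)%:E)%E)) mXu c10) in h2.
  rewrite (ge0_integralZl_EFin P measurableT (fun om _ => N0 om) mN (ltW c20)) in h2.
  have I1 : (\int[P]_om (X u om)%:E <= th%:E)%E.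
    by apply: le_trans s1th; apply: ereal_sup_ubound; exists u.
  have I2 : (\int[P]_om (l1norm_negpow a (M u om) * (X u om)%:E) <= th%:E)%E.
    by apply: le_trans s2th; apply: ereal_sup_ubound; exists u.
  have h3 : ((phi t)%:E <= ((c1 + c2) * th)%:E)%E.
    apply: le_trans (Hphi t ht) _; apply: le_trans h2 _.
    rewrite mulrDl EFinD !EFinM; apply: leeD; apply: lee_wpmul2l => //; rewrite lee_fin //.
    exact: ltW.
  rewrite lee_fin in h3.
  have -> : w s = ws by [].
  rewrite -ler_pdivlMr // mulrAC.
  apply: le_trans h3 _; rewrite le_eqVlt; apply/orP; left; apply/eqP.
  by rewrite /c1 /c2; field; rewrite gt_eqF.
have DD : D <= D' * th.
  apply: ge_sup; first by exists (phi t0 * w s0); exists t0.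
  by move=> _ [t ht <-]; exact: key.
have D0 : 0 <= D by apply: le_trans (ubD t0 ht0); rewrite mulr_ge0.
have DK : D <= K * c0 `^ a.
  case: (leP D (K * c0 `^ a)) => // hlt.
  rewrite /D' max_l in DD; last exact: ltW.
  have Dp : 0 < D by apply: lt_trans hlt; rewrite mulr_gt0.
  have : D * th < D by rewrite gtr_pMr.
  by move=> /(le_lt_trans DD); rewrite ltxx.
have := le_trans (ubD t0 ht0) DK.
rewrite /w -/s0 -/Pa wt_self // powRN -/Pa => h.
rewrite ler_pdivlMr //; nra.
Qed.
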